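(* The critical cardinalities of $\mathrm{Split}(B_\Omega,B_\Lambda)$, $\mathrm{Split}(\Omega,\Lambda)$ and $\mathrm{Split}(C_\Omega,C_\Lambda)$ are all equal to $\mathfrak u$; that is, for each of these three properties, $\mathfrak u$ is the minimal cardinality of a set of reals not satisfying it.
   Context: A set of reals is an infinite topological space homeomorphic to a subset of $\mathbb R$. A cover of a space $X$ is a family $\mathcal U$ of subsets of $X$ with $\bigcup\mathcal U=X$ such that $X\not\subseteq U$ for every $U\in\mathcal U$. A cover is a large cover if every $x\in X$ lies in infinitely many members; an $\omega$-cover if every finite subset of $X$ is contained in some member. $\Lambda,\Omega$ denote the collections of open large covers and open $\omega$-covers of $X$; $B_\Lambda,B_\Omega$ the collections of countable such covers by Borel sets; $C_\Lambda,C_\Omega$ the collections of countable such covers by clopen sets. $X$ satisfies $\mathrm{Split}(\mathfrak U,\mathfrak V)$ if every $\mathcal U\in\mathfrak U$ can be partitioned into two disjoint subfamilies each containing a subfamily belonging to $\mathfrak V$. $\mathfrak u$ is the minimal cardinality of a family $B$ of infinite subsets of $\mathbb N$ which is a base for a nonprincipal ultrafilter $U$ on $\mathbb N$, i.e. $U=\{a\subseteq\mathbb N: \exists b\in B\ (b\setminus a \text{ finite})\}$. *)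

(* Defs.v *)
From HB Require Import structures.
From mathcomp Require Import all_boot all_order all_algebra.
From mathcomp Require Import all_classical all_reals all_analysis.
Set Implicit Arguments. Unset Strict Implicit. Unset Printing Implicit Defensive.
Import Order.TTheory GRing.Theory Num.Theory.
Import numFieldNormedType.Exports.
Local Open Scope classical_set_scope.
Local Open Scope card_scope.

Section Defs.
Variable R : realType.

Definition rel_open (X U : set R) : Prop :=
  exists V : set R, open V /\ U = X `&` V.
Definition rel_borel (X U : set R) : Prop :=
  exists B : set R, <<s [set: R], @open R >> B /\ U = X `&` B.
Definition rel_clopen (X U : set R) : Prop :=
  rel_open X U /\ rel_open X (X `\` U).

Definition is_cover (X : set R) (C : set (set R)) : Prop :=
  (forall U, C U -> U `<=` X) /\
  \bigcup_(U in C) U = X /\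
  (forall U, C U -> ~ (X `<=` U)).
Definition large_cover (X : set R) (C : set (set R)) : Prop :=
  is_cover X C /\ forall x, X x -> infinite_set [set U | C U /\ U x].
Definition omega_cover (X : set R) (C : set (set R)) : Prop :=
  is_cover X C /\
  forall F : set R, finite_set F -> F `<=` X -> exists2 U, C U & F `<=` U.

Definition covLambda (X : set R) (C : set (set R)) : Prop :=
  large_cover X C /\ (forall U, C U -> rel_open X U).
Definition covOmega (X : set R) (C : set (set R)) : Prop :=
  omega_cover X C /\ (forall U, C U -> rel_open X U).
Definition covB_Lambda (X : set R) (C : set (set R)) : Prop :=
  large_cover X C /\ countable C /\ (forall U, C U -> rel_borel X U).
Definition covB_Omega (X : set R) (C : set (set R)) : Prop :=
  omega_cover X C /\ countable C /\ (forall U, C U -> rel_borel X U).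
Definition covC_Lambda (X : set R) (C : set (set R)) : Prop :=
  large_cover X C /\ countable C /\ (forall U, C U -> rel_clopen X U).
Definition covC_Omega (X : set R) (C : set (set R)) : Prop :=
  omega_cover X C /\ countable C /\ (forall U, C U -> rel_clopen X U).

Definition SplitP (KU KV : set R -> set (set R) -> Prop) (X : set R) : Prop :=
  forall C, KU X C ->
  exists C1 C2 : set (set R),
    C1 `|` C2 = C /\ C1 `&` C2 = set0 /\
    (exists2 D1, D1 `<=` C1 & KV X D1) /\
    (exists2 D2, D2 `<=` C2 & KV X D2).

End Defs.

Definition nonprincipal_ultrafilter (U : set (set nat)) : Prop :=
  U setT /\ ~ U set0 /\
  (forall a b, U a -> U b -> U (a `&` b)) /\
  (forall a b, U a -> a `<=` b -> U b) /\
  (forall a, U a \/ U (~` a)) /\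
  (forall n, ~ U [set n]).

Definition generated_by_base (B : set (set nat)) : set (set nat) :=
  [set a | exists2 b, B b & finite_set (b `\` a)].

Definition is_u_base (B : set (set nat)) : Prop :=
  (forall b, B b -> infinite_set b) /\
  nonprincipal_ultrafilter (generated_by_base B).

(* "u is the minimal cardinality of a set of reals not satisfying P":
   (1) every set of reals of cardinality < u satisfies P, i.e. every X strictly
       smaller than every base of a nonprincipal ultrafilter;
   (2) some set of reals of cardinality exactly u (equinumerous with a base of
       minimal cardinality) fails P. *)
Definition critical_card_is_u (R : realType) (P : set R -> Prop) : Prop :=
  (forall X : set R, infinite_set X ->
     (forall B, is_u_base B -> (X #<= B) /\ ~ (B #<= X)) -> P X) /\
  (exists X : set R, infinite_set X /\ ~ P X /\
     exists B0, is_u_base B0 /\ (forall B, is_u_base B -> B0 #<= B) /\ (X #= B0)).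

(* Main.v *)
Require Import Defs.
From HB Require Import structures.
From mathcomp Require Import all_boot all_order all_algebra.
From mathcomp Require Import all_classical all_reals all_analysis.
From mathcomp Require Import lra.
Set Implicit Arguments. Unset Strict Implicit. Unset Printing Implicit Defensive.
Import Order.TTheory GRing.Theory Num.Theory.
Import numFieldNormedType.Exports.
Local Open Scope classical_set_scope.
Local Open Scope card_scope.

Section Core.
Variable R : realType.
Variables (X : set R) (C : set (set R)).
Hypothesis oC : omega_cover X C.

Lemma omega_fin_infinite F : finite_set F -> F `<=` X ->
  infinite_set [set U | C U /\ F `<=` U].
Proof.
move=> fF FX fS.
have /choice[g gP] : forall U : set R, exists x : R, C U -> X x /\ ~ U x.
  move=> U; have [CU|nCU] := pselect (C U); last by exists 0%R.
  have : ~ X `<=` U by apply: oC.1.2.2.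
  move=> /existsNP[x]/not_implyP[Xx nUx]; by exists x.
have fF' : finite_set (F `|` g @` [set U | C U /\ F `<=` U]).
  by rewrite finite_setU; split => //; exact: finite_image.
have F'X : F `|` g @` [set U | C U /\ F `<=` U] `<=` X.
  by move=> x [/FX//|[U [CU _] <-]]; exact: (gP U CU).1.
have [U CU F'U] := oC.2 _ fF' F'X.
have SU : C U /\ F `<=` U by split => // x Fx; apply: F'U; left.
by apply: (gP U CU).2; apply: F'U; right; exists U.
Qed.

Lemma Sx_infinite x : X x -> infinite_set [set U | C U /\ U x].
Proof.
move=> Xx; have := @omega_fin_infinite [set x] (finite_set1 x).
have -> : [set U | C U /\ [set x] `<=` U] = [set U | C U /\ U x].
  apply/seteqP; split=> U [CU H]; split => //; first exact: H.
  by move=> y ->.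
by apply; move=> y ->.
Qed.


Lemma no_split_dich :
  ~ (exists C1 C2, C1 `|` C2 = C /\ C1 `&` C2 = set0 /\
       large_cover X C1 /\ large_cover X C2) ->
  forall a : set (set R),
    (exists2 x, X x & finite_set ([set U | C U /\ U x] `&` a)) \/
    (exists2 x, X x & finite_set ([set U | C U /\ U x] `\` a)).
Proof.
move=> nsplit a; apply: contrapT => /not_orP [h1 h2]; apply: nsplit.
have lc (D : set (set R)) : D `<=` C ->
    (forall x, X x -> infinite_set ([set U | C U /\ U x] `&` D)) ->
    large_cover X D.
  move=> DC hD; split; last first.
    move=> x Xx; apply: sub_infinite_set (hD x Xx).
    by move=> U [[CU Ux] DU].
  split; first by move=> U /DC CU; exact: oC.1.1.
  split; last by move=> U /DC CU; exact: oC.1.2.2.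
  apply/seteqP; split=> [x [U /DC CU Ux]|x Xx]; first exact: oC.1.1 CU _ Ux.
  have [U [[CU Ux] DU]] := infinite_setN0 (hD x Xx).
  by exists U.
exists (C `&` a), (C `\` a); split; first exact: setUIDK.
split; first by apply/seteqP; split => U // [[_ ?] [_ ?]].
split; apply: lc.
- by move=> U [].
- move=> x Xx fin; apply: h1; exists x => //.
  apply: sub_finite_set fin => U [[CU Ux] aU]; split => //; split.
- by move=> U [].
- move=> x Xx fin; apply: h2; exists x => //.
  apply: sub_finite_set fin => U [[CU Ux] aU]; split => //; split.
Qed.

Lemma core_split : infinite_set X -> countable C ->
  (forall B, is_u_base B -> ~ (B #<= X)) ->
  exists C1 C2, C1 `|` C2 = C /\ C1 `&` C2 = set0 /\
       large_cover X C1 /\ large_cover X C2.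
Proof.
move=> iX /countable_injP[e einj] nB; apply: contrapT => nsplit.
have dich := no_split_dich nsplit.
pose S x := [set U | C U /\ U x].
pose T x := e @` S x.
pose pre (a : set nat) := [set U : set R | a (e U)].
have finT (A : set (set R)) : A `<=` C -> finite_set (e @` A) -> finite_set A.
  move=> AC; rewrite (eq_finite_set (inj_card_eq _)) //.
  by move=> U V /set_mem/AC/mem_set UC /set_mem/AC/mem_set VC; apply: einj.
have TD x a : T x `\` a = e @` (S x `\` pre a).
  apply/seteqP; split=> [n [[U SU <-] na]|n [U [SU naU] <-]].
    by exists U.
  by split => //; exists U.
have TI x a : T x `&` a = e @` (S x `&` pre a).
  apply/seteqP; split=> [n [[U SU <-] na]|n [U [SU naU] <-]].
    by exists U.
  by split => //; exists U.
have finTD x a : finite_set (T x `\` a) -> finite_set (S x `\` pre a).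
  by rewrite TD; apply: finT => U [[]].
pose B := [set T x | x in X].
have Binf b : B b -> infinite_set b.
  move=> [x Xx <-] fin; apply: (Sx_infinite Xx); apply: finT => //.
  by move=> U [].
have [x0 Xx0] := infinite_setN0 iX.
have uB : is_u_base B.
  split => //; split.
    by exists (T x0); [exists x0|rewrite setDT; exact: finite_set0].
  split.
    move=> [b [x Xx <-]]; rewrite setD0 => fin.
    by apply: (Binf (T x)) => //; exists x.
  split.
    move=> a1 a2 [_ [x Xx <-] f1] [_ [y Xy <-] f2].
    have [[z Xz fz]|[z Xz fz]] := dich (pre (a1 `&` a2)); last first.
      by exists (T z); [exists z|rewrite TD; exact: finite_image].
    exfalso.
    have F3 : finite_set [set x; y; z] by exact: finite_set3.
    have F3X : [set x; y; z] `<=` X by move=> w [[->|->]|->].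
    apply: (omega_fin_infinite F3 F3X).
    have := finTD _ _ f1; have := finTD _ _ f2 => g2 g1.
    apply: sub_finite_set (_ : _ `<=` (S x `\` pre a1) `|` (S y `\` pre a2)
        `|` (S z `&` pre (a1 `&` a2))) _; last first.
      by rewrite !finite_setU.
    move=> U [CU sU].
    have Ux : U x by apply: sU; left; left.
    have Uy : U y by apply: sU; left; right.
    have Uz : U z by apply: sU; right.
    have [a1U|na1U] := pselect (a1 (e U)); last by left; left.
    have [a2U|na2U] := pselect (a2 (e U)); last by left; right.
    by right.
  split.
    move=> a b [_ [x Xx <-] fa] ab; exists (T x); first by exists x.
    by apply: sub_finite_set fa => n [Tn nb]; split => // /ab.
  split.
    move=> a; have [[z Xz fz]|[z Xz fz]] := dich (pre a).
      right; exists (T z); first by exists z.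
      by rewrite setDE setCK TI; exact: finite_image.
    by left; exists (T z); [exists z|rewrite TD; exact: finite_image].
  move=> n [_ [x Xx <-] fin]; apply: (Binf (T x)); first by exists x.
  apply: sub_finite_set (_ : _ `<=` (T x `\` [set n]) `|` [set n]) _.
    by move=> m Tm; have [->|mn] := pselect (m = n); [right|left].
  by rewrite finite_setU; split => //; exact: finite_set1.
by apply: (nB B uB); exact: card_image_le.
Qed.

End Core.

Section Reduce.
Variable R : realType.
Local Open Scope ring_scope.

Lemma open_rat_itv (W : set R) x : open W -> W x ->
  exists p : rat * rat, ratr p.1 < x < ratr p.2 /\
     (forall r, ratr p.1 < r < ratr p.2 -> W r).
Proof.
move=> oW Wx.
have : nbhs x W by apply: open_nbhs_nbhs; split.
move=> /nbhs_ballP[e /= e0 eW].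
have [q1] : exists q, ratr q \in `]x - e, x[.
  by apply: rat_in_itvoo; rewrite ltrBlDr ltrDl.
rewrite in_itv /= => /andP[q1a q1b].
have [q2] : exists q, ratr q \in `]x, x + e[.
  by apply: rat_in_itvoo; rewrite ltrDl.
rewrite in_itv /= => /andP[q2a q2b].
exists (q1, q2); split; first by rewrite /= q1b q2a.
move=> r /andP[/= r1 r2]; apply: eW; rewrite ball_itv /= in_itv /=.
apply/andP; split; first exact: lt_trans q1a r1.
exact: lt_trans r2 q2b.
Qed.


Lemma omega_countable_sub (X : set R) (C : set (set R)) :
  omega_cover X C -> (forall U, C U -> rel_open X U) ->
  exists C', C' `<=` C /\ countable C' /\ omega_cover X C'.
Proof.
move=> oC oU.
pose V (s : seq (rat * rat)) :=
  [set r : R | exists2 p, p \in s & ratr p.1 < r < ratr p.2].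
pose good s := exists2 U, C U & X `&` V s `<=` U.
have /choice[g gP] : forall s, exists U, good s -> C U /\ X `&` V s `<=` U.
  move=> s; have [[U CU sU]|ng] := pselect (good s); last by exists set0.
  by exists U.
pose C' := g @` good.
have C'C : C' `<=` C by move=> _ [s gs <-]; exact: (gP s gs).1.
have omg : forall F, finite_set F -> F `<=` X -> exists2 U, C' U & F `<=` U.
  move=> F fF FX; have [U CU FU] := oC.2 F fF FX.
  have [W [oW UE]] := oU U CU.
  have /choice[h hP] : forall x : R, exists p : rat * rat, W x ->
      ratr p.1 < x < ratr p.2 /\ (forall r, ratr p.1 < r < ratr p.2 -> W r).
    move=> x; have [Wx|nWx] := pselect (W x); last by exists (0, 0)%R.
    by have [p Hp] := open_rat_itv oW Wx; exists p.
  pose s := [seq h x | x <- finmap.enum_fset (fset_set F)].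
  have WF x : F x -> W x by move=> /FU; rewrite UE => -[].
  have FV : F `<=` V s.
    move=> x Fx; exists (h x); first by apply: map_f; rewrite in_fset_set // inE.
    exact: (hP x (WF x Fx)).1.
  have VU : X `&` V s `<=` U.
    move=> r [Xr [p ps pr]]; rewrite UE; split => //.
    move: ps pr => /mapP[x xF ->] pr; move: xF; rewrite in_fset_set // inE => Fx.
    exact: (hP x (WF x Fx)).2.
  have gs : good s by exists U.
  exists (g s); first by exists s.
  move=> x Fx; apply: (gP s gs).2; split; [exact: FX|exact: FV].
exists C'; split => //; split.
  apply: (card_le_trans (card_image_le _ _)); exact: countableP.
split => //; split; first by move=> U /C'C; exact: oC.1.1.
split; last by move=> U /C'C; exact: oC.1.2.2.
apply/seteqP; split=> [x [U /C'C CU Ux]|x Xx]; first exact: oC.1.1 CU _ Ux.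
have [U C'U xU] := omg [set x] (finite_set1 x) (fun y yx => eq_ind_r X Xx yx).
by exists U => //; exact: xU.
Qed.

End Reduce.

Section Part1.
Variable R : realType.

Let hyp (X : set R) := forall B, is_u_base B -> X #<= B /\ ~ (B #<= X).

Lemma part1_B (X : set R) : infinite_set X -> hyp X ->
  SplitP (@covB_Omega R) (@covB_Lambda R) X.
Proof.
move=> iX H C [oC [cC bC]].
have [C1 [C2 [UC [IC [l1 l2]]]]] :=
  core_split oC iX cC (fun B uB => (H B uB).2).
have s1 : C1 `<=` C by rewrite -UC => U ?; left.
have s2 : C2 `<=` C by rewrite -UC => U ?; right.
exists C1, C2; split => //; split => //; split.
  exists C1 => //; split => //; split; last by move=> U /s1 /bC.
  exact: sub_countable (subset_card_le s1) cC.
exists C2 => //; split => //; split; last by move=> U /s2 /bC.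
exact: sub_countable (subset_card_le s2) cC.
Qed.

Lemma part1_C (X : set R) : infinite_set X -> hyp X ->
  SplitP (@covC_Omega R) (@covC_Lambda R) X.
Proof.
move=> iX H C [oC [cC bC]].
have [C1 [C2 [UC [IC [l1 l2]]]]] :=
  core_split oC iX cC (fun B uB => (H B uB).2).
have s1 : C1 `<=` C by rewrite -UC => U ?; left.
have s2 : C2 `<=` C by rewrite -UC => U ?; right.
exists C1, C2; split => //; split => //; split.
  exists C1 => //; split => //; split; last by move=> U /s1 /bC.
  exact: sub_countable (subset_card_le s1) cC.
exists C2 => //; split => //; split; last by move=> U /s2 /bC.
exact: sub_countable (subset_card_le s2) cC.
Qed.

Lemma part1_O (X : set R) : infinite_set X -> hyp X ->
  SplitP (@covOmega R) (@covLambda R) X.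
Proof.
move=> iX H C [oC oU].
have [C' [C'C [cC' oC']]] := omega_countable_sub oC oU.
have [C1 [C2 [UC [IC [l1 l2]]]]] :=
  core_split oC' iX cC' (fun B uB => (H B uB).2).
have s1 : C1 `<=` C' by rewrite -UC => U ?; left.
have s2 : C2 `<=` C' by rewrite -UC => U ?; right.
exists (C1 `|` (C `\` C')), C2; split.
  rewrite setUAC UC; exact: setDUK.
split.
  apply/seteqP; split => // U [[C1U|[_ nC'U]] C2U].
    by rewrite -IC; split.
  by apply: nC'U; exact: s2.
split.
  exists C1; first by move=> U ?; left.
  by split => // U /s1 /C'C /oU.
by exists C2 => //; split => // U /s2 /C'C /oU.
Qed.

End Part1.
Lemma fin_nat_bound (A : set nat) : finite_set A -> exists N, forall n, A n -> (n < N)%N.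
Proof.
move=> /finite_fsetP[S ->]; exists (\max_(i <- finmap.enum_fset S) i).+1 => n /= nS.
by rewrite ltnS; apply: (leq_bigmax_seq n nS).
Qed.

Lemma exists_u_base : exists B, is_u_base B.
Proof.
have [G [UG FG]] := ultraFilterLemma (@eventually_filter).
have finG A : finite_set A -> ~ G A.
  move=> /fin_nat_bound[N AN] GA.
  have GC : G [set n | (N <= n)%N] by apply: FG; exists N.
  apply: (@filter_not_empty _ G _).
  apply: filterS (filterI GA GC) => n [An Nn].
  by have := AN n An; rewrite ltnNge Nn.
exists G; split; first by move=> b Gb fb; exact: finG fb Gb.
have gen : generated_by_base G = G.
  apply/seteqP; split=> a.
  - move=> [b Gb fba].
    have Gc : G (~` (b `\` a)).
      by case: (in_ultra_setVsetC (b `\` a) UG) => // /finG.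
    apply: filterS (filterI Gb Gc) => n [bn ncn]; apply: contrapT => na.
    by apply: ncn; split.
  - by move=> Ga; exists a => //; rewrite setDv; exact: finite_set0.
rewrite gen; split; first exact: filterT.
split; first exact: filter_not_empty.
split; first by move=> a b; exact: filterI.
split; first by move=> a b Ga ab; exact: filterS ab Ga.
split; first by move=> a; exact: in_ultra_setVsetC.
by move=> n; apply: finG; exact: finite_set1.
Qed.

Lemma card_min (T : Type) (P : set (set T)) : (exists A, P A) ->
  exists A0, P A0 /\ forall A, P A -> A0 #<= A.
Proof.
move=> [A1 PA1].
have [P0|nP0] := pselect (P set0).
  by exists set0; split => // A _; exact: card_ge0.
have [t0 _] : A1 !=set0.
  by apply/set0P/eqP => A10; apply: nP0; rewrite -A10.
pose Q (S : set (set T -> T)) :=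
  (forall s, S s -> forall A, P A -> A (s A)) /\
  (forall s t, S s -> S t -> s <> t -> forall A, P A -> s A <> t A).
have [S [[QS1 QS2] Smax]] : exists S, Q S /\ forall S', S `<` S' -> ~ Q S'.
  apply: Zorn_bigcup => F FQ Ftot; split.
    by move=> s [S FS Ss]; exact: (FQ S FS).1.
  move=> s t [S1 FS1 sS1] [S2 FS2 tS2].
  have [S12|S21] := Ftot _ _ FS1 FS2.
    by apply: (FQ S2 FS2).2 => //; exact: S12.
  by apply: (FQ S1 FS1).2 => //; exact: S21.
have [A0 [PA0 A0S]] : exists A0, P A0 /\
    forall a, A0 a -> exists2 s, S s & s A0 = a.
  apply: contrapT => hn.
  have /choice[g gP] : forall A, exists a, P A -> A a /\ forall s, S s -> s A <> a.
    move=> A; have [PA|nPA] := pselect (P A); last by exists t0.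
    have : ~ (forall a, A a -> exists2 s, S s & s A = a).
      by move=> h; apply: hn; exists A.
    move=> /existsNP[a] /not_implyP[Aa ha]; exists a => _; split => // s Ss sa.
    by apply: ha; exists s.
  have ngS : ~ S g by move=> Sg; exact: (gP A1 PA1).2 g Sg erefl.
  apply: (Smax (S `|` [set g])).
    split; first by move=> s Ss; left.
    by move=> h; apply: ngS; apply: h; right.
  split.
    by move=> s [/QS1 //|->] A PA; exact: (gP A PA).1.
  move=> s t [Ss|->] [St|->] st A PA.
  - exact: QS2.
  - exact: (gP A PA).2 s Ss.
  - by move=> e; apply: ((gP A PA).2 t St); rewrite e.
  - by case: st.
exists A0; split => // A PA.
have /choice[h hP] : forall a, exists s, A0 a -> S s /\ s A0 = a.
  move=> a; have [A0a|nA0a] := pselect (A0 a); last by exists (fun=> t0).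
  by have [s Ss sa] := A0S a A0a; exists s.
have : $|{injfun A0 >-> A}|.
  apply/injfunPex; exists (fun a => h a A).
    by move=> a A0a; exact: (QS1 _ (hP a A0a).1 _ PA).
  move=> a b /set_mem A0a /set_mem A0b hab.
  have [Sa ea] := hP a A0a; have [Sb eb] := hP b A0b.
  have hh : h a = h b.
    by apply: contrapT => ne; exact: QS2 Sa Sb ne A PA hab.
  by rewrite -ea -eb hh.
by case=> f; exact: inj_card_le.
Qed.
Section Cantor.
Variable R : realType.
Local Open Scope ring_scope.
Let r : R := 3^-1.
Let r0 : 0 <= r. Proof. by rewrite /r invr_ge0. Qed.
Let r1 : r <= 1. Proof. by rewrite /r invf_le1 // ler1n. Qed.
Let rS n : r ^+ n.+1 * 3 = r ^+ n.
Proof. by rewrite exprSr -mulrA /r mulVf ?mulr1. Qed.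
Let rpos n : 0 <= r ^+ n. Proof. exact: exprn_ge0. Qed.

Definition term (b : set nat) k : R := if `[< b k >] then 2 * r ^+ k.+1 else 0.
Definition ps (b : set nat) N : R := \sum_(k < N) term b k.
Definition cf (b : set nat) : R := limn (ps b).

Lemma term_ge0 b k : 0 <= term b k.
Proof. rewrite /term; case: asboolP => // _; have := rpos k.+1; lra. Qed.

Lemma term_le b k : term b k <= 2 * r ^+ k.+1.
Proof. rewrite /term; case: asboolP => // _; have := rpos k.+1; lra. Qed.

Lemma psS b N : ps b N.+1 = ps b N + term b N.
Proof. by rewrite /ps big_ord_recr. Qed.

Lemma ps_le1 b N : ps b N <= 1 - r ^+ N.
Proof.
elim: N => [|N IH]; first by rewrite /ps big_ord0 expr0 subrr.
rewrite psS; have := term_le b N; have := rS N; lra.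
Qed.

Lemma ps_cvg b : cvgn (ps b).
Proof.
apply: cvgP (nondecreasing_cvgn _ _).
  by apply/nondecreasing_seqP => n; rewrite psS; have := term_ge0 b n; lra.
exists 1 => _ [N _ <-]; have := ps_le1 b N; have := rpos N; lra.
Qed.

Lemma ps_agree b c m : (forall k, (k < m)%N -> (b k <-> c k)) ->
  ps b m = ps c m.
Proof.
move=> h; apply: eq_bigr => i _; rewrite /term.
by have -> : b i = c i by apply: propext; apply: h.
Qed.

Lemma key b c m : (forall k, (k < m)%N -> (b k <-> c k)) -> c m -> ~ b m ->
  r ^+ m.+1 <= cf c - cf b.
Proof.
move=> h cm nbm.
have D j : r ^+ m.+1 + r ^+ (m.+1 + j) <= ps c (m.+1 + j) - ps b (m.+1 + j).
  elim: j => [|j IH].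
    rewrite addn0 !psS (ps_agree h) /term.
    case: asboolP => // _; case: asboolP => // _; lra.
  rewrite addnS (psS c (m.+1 + j)) (psS b (m.+1 + j)).
  have := term_ge0 b (m.+1 + j); have := term_ge0 c (m.+1 + j).
  have := term_le b (m.+1 + j); have := rS (m.+1 + j); lra.
rewrite /cf -limB; [|exact: ps_cvg|exact: ps_cvg].
apply: limr_ge; first by apply: is_cvgB; exact: ps_cvg.
exists m.+1 => // N /= HN; rewrite -(subnKC HN).
have -> : (ps c - ps b) (m.+1 + (N - m.+1))%N =
  ps c (m.+1 + (N - m.+1)) - ps b (m.+1 + (N - m.+1)) by [].
have := D (N - m.+1)%N; have := rpos (m.+1 + (N - m.+1)); lra.
Qed.

Lemma first_diff (b c : set nat) n : c n -> ~ b n ->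
  exists m, (m <= n)%N /\ (forall k, (k < m)%N -> (b k <-> c k)) /\
    ((c m /\ ~ b m) \/ (b m /\ ~ c m)).
Proof.
move=> cn nbn.
have exP : exists k, `[< b k >] != `[< c k >].
  by exists n; rewrite (asboolT cn) (asboolF nbn).
case: (ex_minnP exP) => m Pm minm; exists m; split.
  by apply: minm; rewrite (asboolT cn) (asboolF nbn).
split.
  move=> k km; have : ~~ (`[< b k >] != `[< c k >]).
    by apply/negP => /minm; rewrite leqNgt km.
  rewrite negbK => /eqP e; split => [bk|ck].
    by apply/asboolP; rewrite -e; apply/asboolP.
  by apply/asboolP; rewrite e; apply/asboolP.
move: Pm; case: (asboolP (b m)); case: (asboolP (c m)) => // ? ? _.
- by right.
- by left.
Qed.

Lemma cf_sep (b c : set nat) n : c n -> ~ b n -> r ^+ n.+1 <= `|cf c - cf b|.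
Proof.
move=> cn nbn; have [m [mn [ag [[cm nbm]|[bm ncm]]]]] := first_diff cn nbn.
  apply: le_trans (ler_norm _); apply: le_trans (key ag cm nbm).
  exact: ler_wiXn2l.
rewrite distrC; apply: le_trans (ler_norm _).
have ag' k : (k < m)%N -> (c k <-> b k) by move=> /ag [].
apply: le_trans (key ag' bm ncm); exact: ler_wiXn2l.
Qed.

End Cantor.

Section Counter.
Variable R : realType.
Local Open Scope ring_scope.
Variable B0 : set (set nat).
Hypothesis uB : is_u_base B0.

Let G := generated_by_base B0.
Let GT : G setT := uB.2.1.
Let G0 : ~ G set0 := uB.2.2.1.
Let GI : forall a b, G a -> G b -> G (a `&` b) := uB.2.2.2.1.
Let GS : forall a b, G a -> a `<=` b -> G b := uB.2.2.2.2.1.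
Let GU : forall a, G a \/ G (~` a) := uB.2.2.2.2.2.1.
Let Binf : forall b, B0 b -> infinite_set b := uB.1.

Let G_fin a : finite_set a -> ~ G a.
Proof.
move=> fa [b Bb fba]; apply: (Binf Bb).
apply: sub_finite_set (_ : b `<=` (b `\` a) `|` a) _.
  by move=> n bn; have [an|nan] := pselect (a n); [right|left].
by rewrite finite_setU.
Qed.

Let G_B b : B0 b -> G b.
Proof. by move=> Bb; exists b => //; rewrite setDv; exact: finite_set0. Qed.

Let G_bigcap (Fm : set (set nat)) : finite_set Fm -> Fm `<=` G ->
  G [set n | forall b, Fm b -> b n].
Proof.
move=> /finite_seqP[s ->] {Fm}; elim: s => [|c s IH] sG.
  by apply: GS GT _ => n _ b /=; rewrite in_nil.
have Gc : G c by apply: sG; rewrite /= mem_head.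
have Gs : G [set n | forall b, [set` s] b -> b n].
  by apply: IH => b bs; apply: sG; rewrite /= in_cons bs orbT.
apply: GS (GI Gc Gs) _ => n [cn sn] b /=; rewrite in_cons => /orP[/eqP->//|bs].
exact: sn.
Qed.

Let K0 := [set n | forall b, B0 b -> b n].

Let even_inf : infinite_set [set n | ~~ odd n].
Proof.
move=> /fin_nat_bound[N HN]; have := HN N.*2; rewrite /= odd_double => /(_ isT).
by rewrite ltnNge -addnn leq_addr.
Qed.

Let odd_inf : infinite_set [set n | odd n].
Proof.
move=> /fin_nat_bound[N HN]; have := HN N.*2.+1; rewrite /= odd_double => /(_ isT).
by rewrite ltnNge -addnn => /negP; apply; apply: leqW; exact: leq_addr.
Qed.

Let noK : ~ G K0.
Proof.
move=> GK; have iK : infinite_set K0 by move=> f; exact: G_fin f GK.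
move/infiniteP: iK => /pcard_leP/injfunPex[g gK ginj].
have img_inf (A : set nat) : infinite_set A -> infinite_set (g @` A).
  rewrite (eq_finite_set (inj_card_eq _)) // => x y _ _; apply: ginj; by rewrite inE.
pose K1 := g @` [set n | ~~ odd n].
case: (GU K1) => [[b Bb fb]|[b Bb fb]].
  apply: (img_inf _ odd_inf); apply: sub_finite_set fb => _ [n On <-]; split.
    exact: gK.
  move=> [m Em gmn]; have mn : m = n by apply: ginj; rewrite ?inE.
  by move: Em; rewrite mn /= On.
apply: (img_inf _ even_inf); apply: sub_finite_set fb => _ [n En <-]; split.
  exact: gK.
by move=> h; apply: h; exists n.
Qed.

Let N' := [set n | exists2 b, B0 b & ~ b n].

Let GN' : G N'.
Proof.
case: (GU K0) => [/noK//|GK]; apply: GS GK _ => n nK; apply: contrapT => h.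
apply: nK => b Bb; apply: contrapT => nb; apply: h; by exists b.
Qed.

Lemma B0_inf : infinite_set B0.
Proof. by move=> fB; apply: noK; apply: G_bigcap fB _ => b /G_B. Qed.

Lemma cf_inj : injective (@cf R).
Proof.
move=> b c e; apply: contrapT => bc.
have [n [[cn nbn]|[bn ncn]]] : exists n, (c n /\ ~ b n) \/ (b n /\ ~ c n).
  apply: contrapT => h; apply: bc; apply/funext => n; apply/propext.
  split => H; apply: contrapT => H'; apply: h; exists n; [right|left]; by split.
  have := cf_sep R cn nbn; rewrite e subrr normr0.
  by rewrite leNgt exprn_gt0 // invr_gt0.
have := cf_sep R bn ncn; rewrite e subrr normr0.
by rewrite leNgt exprn_gt0 // invr_gt0.
Qed.

Let Xc := @cf R @` B0.
Let Un n := @cf R @` [set b | B0 b /\ b n].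
Let Cov := Un @` N'.

Let Un_mem b n : B0 b -> Un n (cf R b) <-> b n.
Proof.
move=> Bb; split; last by move=> bn; exists b.
by move=> [c [Bc cn] /cf_inj <-].
Qed.

Lemma omega_Cov : omega_cover Xc Cov.
Proof.
have omg F : finite_set F -> F `<=` Xc -> exists2 U, Cov U & F `<=` U.
  move=> fF FX; pose Fb := [set b | B0 b /\ F (cf R b)].
  have fFb : finite_set Fb.
    rewrite -(eq_finite_set (inj_card_eq (f := @cf R) _)); last first.
      by move=> x y _ _ /cf_inj.
    by apply: sub_finite_set fF => _ [b [_ Fb'] <-].
  have GFN := GI (G_bigcap fFb (fun b bF => G_B bF.1)) GN'.
  have [n [Fn N'n]] : exists n, ([set n | forall b, Fb b -> b n] `&` N') n.
    apply: contrapT => h; apply: G0; apply: GS GFN _ => n hn; apply: h.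
    by exists n.
  exists (Un n); first by exists n.
  move=> x Fx; have [b Bb bx] := FX x Fx.
  by rewrite -bx; apply/Un_mem => //; apply: Fn; split => //; rewrite bx.
split => //; split.
  by move=> _ [n _ <-] _ [b [Bb _] <-]; exists b.
split.
  apply/seteqP; split=> [x [_ [n _ <-] [b [Bb _] <-]]|x Xx]; first by exists b.
  have [U CU xU] := omg [set x] (finite_set1 x) (fun y yx => eq_ind_r Xc Xx yx).
  by exists U => //; exact: xU.
move=> _ [n [b Bb nbn] <-] XU; apply: nbn; apply/(Un_mem n Bb); apply: XU.
by exists b.
Qed.

Lemma countable_Cov : countable Cov.
Proof. exact: (card_le_trans (card_image_le _ _) (countableP _)). Qed.

Lemma Un_clopen n : rel_clopen Xc (Un n).
Proof.
have rp : 0 < (3^-1 : R) ^+ n.+1 by rewrite exprn_gt0 // invr_gt0.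
split.
  exists (\bigcup_(b in [set b | B0 b /\ b n]) ball (cf R b) ((3^-1 : R) ^+ n.+1)).
  split; first by apply: bigcup_open => b _; exact: ball_open.
  apply/seteqP; split.
    move=> _ [b [Bb bn] <-]; split; first by exists b.
    by exists b => //; exact: ballxx.
  move=> _ [[c Bc <-] [b [Bb bn] bl]]; apply/(Un_mem n Bc).
  apply: contrapT => ncn; have := cf_sep R bn ncn.
  move: bl; rewrite ball_itv /= in_itv /= -ltr_distlC => bl.
  by rewrite leNgt bl.
exists (\bigcup_(b in [set b | B0 b /\ ~ b n]) ball (cf R b) ((3^-1 : R) ^+ n.+1)).
split; first by apply: bigcup_open => b _; exact: ball_open.
apply/seteqP; split.
  move=> _ [[c Bc <-] nU]; split; first by exists c.
  exists c; last exact: ballxx.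
  by split => // cn; apply: nU; apply/Un_mem.
move=> _ [[c Bc <-] [b [Bb nbn] bl]]; split; first by exists c.
move/(Un_mem n Bc) => cn; have := cf_sep R cn nbn.
move: bl; rewrite ball_itv /= in_itv /= -ltr_distlC distrC => bl.
by rewrite leNgt bl.
Qed.

Lemma Cov_not_split C1 C2 : C1 `|` C2 = Cov -> C1 `&` C2 = set0 ->
  (exists2 D1, D1 `<=` C1 & large_cover Xc D1) ->
  (exists2 D2, D2 `<=` C2 & large_cover Xc D2) -> False.
Proof.
move=> UC IC [D1 s1 l1] [D2 s2 l2].
have CovC1 U : C1 U -> Cov U by rewrite -UC; left.
have CovC2 U : C2 U -> Cov U by rewrite -UC; right.
pose a := [set n | C1 (Un n)].
case: (GU a) => [[b Bb fb]|[b Bb fb]].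
  have Xb : Xc (cf R b) by exists b.
  apply: (l2.2 _ Xb); apply: sub_finite_set (finite_image Un fb).
  move=> U [/s2 C2U Ux]; have := CovC2 U C2U => -[n N'n Un_eq].
  exists n => //; split; first by apply/(Un_mem n Bb); rewrite Un_eq.
  move=> an; have : (C1 `&` C2) U by rewrite -Un_eq; split => //; rewrite Un_eq.
  by rewrite IC.
have Xb : Xc (cf R b) by exists b.
apply: (l1.2 _ Xb); apply: sub_finite_set (finite_image Un fb).
move=> U [/s1 C1U Ux]; have := CovC1 U C1U => -[n N'n Un_eq].
exists n => //; split; first by apply/(Un_mem n Bb); rewrite Un_eq.
by move=> h; apply: h; rewrite /a /= Un_eq.
Qed.

Lemma part2_all :
  infinite_set Xc /\
  ~ SplitP (@covC_Omega R) (@covC_Lambda R) Xc /\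
  ~ SplitP (@covOmega R) (@covLambda R) Xc /\
  ~ SplitP (@covB_Omega R) (@covB_Lambda R) Xc /\
  (Xc #= B0)%card.
Proof.
have XB : (Xc #= B0)%card by apply: inj_card_eq => x y _ _ /cf_inj.
split; first by rewrite (eq_finite_set XB); exact: B0_inf.
have oC := omega_Cov.
have Uo U : Cov U -> rel_open Xc U by move=> [n _ <-]; exact: (Un_clopen n).1.
have Cc U : Cov U -> rel_clopen Xc U by move=> [n _ <-]; exact: Un_clopen.
have Cb U : Cov U -> rel_borel Xc U.
  by move=> /Uo [V [oV e]]; exists V; split => //; exact: sub_sigma_algebra.
split.
  move=> HS; have [C1 [C2 [UC [IC [[D1 s1 L1] [D2 s2 L2]]]]]] :=
    HS Cov (conj oC (conj countable_Cov Cc)).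
  by apply: (Cov_not_split UC IC); [exists D1 => //; exact: L1.1|exists D2 => //; exact: L2.1].
split.
  move=> HS; have [C1 [C2 [UC [IC [[D1 s1 L1] [D2 s2 L2]]]]]] := HS Cov (conj oC Uo).
  by apply: (Cov_not_split UC IC); [exists D1 => //; exact: L1.1|exists D2 => //; exact: L2.1].
split => //.
move=> HS; have [C1 [C2 [UC [IC [[D1 s1 L1] [D2 s2 L2]]]]]] :=
  HS Cov (conj oC (conj countable_Cov Cb)).
by apply: (Cov_not_split UC IC); [exists D1 => //; exact: L1.1|exists D2 => //; exact: L2.1].
Qed.

End Counter.

Theorem theorem5p3 (R : realType) :
  critical_card_is_u (SplitP (@covB_Omega R) (@covB_Lambda R)) /\
  critical_card_is_u (SplitP (@covOmega R) (@covLambda R)) /\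
  critical_card_is_u (SplitP (@covC_Omega R) (@covC_Lambda R)).
Proof.
have [B0 [uB0 minB0]] := card_min exists_u_base.
have [iX [nC [nO [nB XB]]]] := part2_all R uB0.
split; [|split].
- split; first by move=> X iX' H; exact: part1_B iX' H.
  exists (cf R @` B0); split => //; split => //; by exists B0.
- split; first by move=> X iX' H; exact: part1_O iX' H.
  exists (cf R @` B0); split => //; split => //; by exists B0.
- split; first by move=> X iX' H; exact: part1_C iX' H.
  exists (cf R @` B0); split => //; split => //; by exists B0.
Qed.
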